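(* Let $\sigma$ be a signature containing $\triangleright$ and let $\mathcal{A}$ be a $\sigma$-algebra that is representable by partial functions and whose atoms are separating. Then $\lhd$ is completely left-distributive over joins: for every $S\subseteq\mathcal{A}$ such that $\bigvee S$ exists and every $a\in\mathcal{A}$, $\bigvee\{a\lhd s : s\in S\}$ exists and equals $a \lhd \bigvee S$.
   Context: Signatures $\sigma$ are sets of operation symbols drawn from: $\triangleright$ (antidomain restriction), $;$ (composition), $\wedge$ (intersection), $\mathrm{upd}$ (update), $\sqcup$ (preferential union), $\mathsf{D}$ (domain), $\mathsf{A}$ (antidomain), interpreted on partial functions as: $f \triangleright g = \{(x,y) \in g : x \notin \mathrm{dom}(f)\}$; $f;g$ = relational composition ($f$ first); $f\wedge g = f\cap g$; $\mathrm{upd}(f,g)(x)$ is $f(x)$ if $f(x)$ defined and $g(x)$ undefined, $g(x)$ if both defined, undefined otherwise; $(f\sqcup g)(x)$ is $f(x)$ if defined, else $g(x)$; $\mathsf{D}(f)$ = identity on $\mathrm{dom}(f)$; $\mathsf{A}(f)$ = identity on the complement of $\mathrm{dom}(f)$ in the base. $\mathcal{A}$ is representable if isomorphic to a $\sigma$-algebra of partial functions with these operations. Define $0 := a\triangleright a$, $a\lhd b := (a\triangleright b)\triangleright b$ (restriction of $b$ to the domain of $a$), $a \le b :\iff a\lhd b = a$. An atom is a minimal nonzero element; atoms are separating if whenever $a\not\le b$ there is an atom $c\le a$ with $c\not\le b$. *)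

(* Defs.v *)
Inductive op : Type :=
  | ORestr
  | OComp
  | OMeet
  | OUpd
  | OPref
  | ODom
  | OAdom.

Definition op_type (o : op) (T : Type) : Type :=
  match o with
  | ODom | OAdom => T -> T
  | _ => T -> T -> T
  end.

Definition signature := op -> Prop.

Record sigma_algebra (sig : signature) : Type := {
  carrier :> Type;
  interp : forall o : op, sig o -> op_type o carrier
}.
Arguments interp {sig} _ o _.

(* Partial functions on a base X, represented by their graphs. *)
Definition pfun (X : Type) := X -> X -> Prop.

Definition functional {X : Type} (f : pfun X) : Prop :=
  forall x y z, f x y -> f x z -> y = z.

Definition pdom {X : Type} (f : pfun X) (x : X) : Prop := exists y, f x y.

Definition pf_restr {X} (f g : pfun X) : pfun X :=
  fun x y => g x y /\ ~ pdom f x.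
Definition pf_comp {X} (f g : pfun X) : pfun X :=
  fun x z => exists y, f x y /\ g y z.
Definition pf_meet {X} (f g : pfun X) : pfun X :=
  fun x y => f x y /\ g x y.
Definition pf_upd {X} (f g : pfun X) : pfun X :=
  fun x y => (f x y /\ ~ pdom g x) \/ (g x y /\ pdom f x).
Definition pf_pref {X} (f g : pfun X) : pfun X :=
  fun x y => f x y \/ (~ pdom f x /\ g x y).
Definition pf_D {X} (f : pfun X) : pfun X :=
  fun x y => x = y /\ pdom f x.
Definition pf_A {X} (f : pfun X) : pfun X :=
  fun x y => x = y /\ ~ pdom f x.

Definition preserves {sig : signature} (A : sigma_algebra sig) {X : Type}
  (h : A -> pfun X) (o : op) : op_type o A -> Prop :=
  match o with
  | ORestr => fun f => forall a b, h (f a b) = pf_restr (h a) (h b)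
  | OComp  => fun f => forall a b, h (f a b) = pf_comp (h a) (h b)
  | OMeet  => fun f => forall a b, h (f a b) = pf_meet (h a) (h b)
  | OUpd   => fun f => forall a b, h (f a b) = pf_upd (h a) (h b)
  | OPref  => fun f => forall a b, h (f a b) = pf_pref (h a) (h b)
  | ODom   => fun f => forall a, h (f a) = pf_D (h a)
  | OAdom  => fun f => forall a, h (f a) = pf_A (h a)
  end.

(* Representable: isomorphic to a sigma-algebra of partial functions,
   i.e. there is an injective sigma-homomorphism into partial functions
   on some base set X. *)
Definition representable {sig : signature} (A : sigma_algebra sig) : Prop :=
  exists (X : Type) (h : A -> pfun X),
    (forall a b, h a = h b -> a = b) /\
    (forall a, functional (h a)) /\
    (forall (o : op) (p : sig o), preserves A h o (interp A o p)).

Section Derived.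
Context {sig : signature} (A : sigma_algebra sig) (H : sig ORestr).

Definition restr (a b : A) : A := interp A ORestr H a b.
Definition zero (a : A) : A := restr a a.
Definition lhd (a b : A) : A := restr (restr a b) b.
Definition le (a b : A) : Prop := lhd a b = a.

(* 0 := a |> a (does not depend on a in representable algebras; we use
   the statement "c is not of the form 0" as c <> zero c). *)
Definition is_atom (c : A) : Prop :=
  c <> zero c /\ forall d, le d c -> d = zero d \/ d = c.

Definition atoms_separating : Prop :=
  forall a b, ~ le a b -> exists c, is_atom c /\ le c a /\ ~ le c b.

Definition is_lub (S : A -> Prop) (j : A) : Prop :=
  (forall s, S s -> le s j) /\
  (forall u, (forall s, S s -> le s u) -> le j u).
End Derived.

(* Main.v *)
Require Import Defs.
From Stdlib Require Import Classical FunctionalExtensionality PropExtensionality.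

Lemma graph_eq {X} (f g : pfun X) : (forall p q, f p q <-> g p q) -> f = g.
Proof.
  intro E. apply functional_extensionality; intro p.
  apply functional_extensionality; intro q. apply propositional_extensionality. apply E.
Qed.

Section Pf.
Context (sig : signature) (H : sig ORestr) (A : sigma_algebra sig)
  (X : Type) (h : A -> pfun X)
  (Hinj : forall a b, h a = h b -> a = b)
  (Hfun : forall a, functional (h a))
  (Hr : forall a b, h (restr A H a b) = pf_restr (h a) (h b)).

Lemma lhd_graph x y p q : h (lhd A H x y) p q <-> h y p q /\ pdom (h x) p.
Proof.
  unfold lhd. rewrite Hr, Hr. unfold pf_restr, pdom. split.
  - intros [Hy Hn]. split; auto. apply NNPP; intro Hc. apply Hn. exists q. auto.
  - intros [Hy Hx]. split; auto. intros [z [_ Hz]]. auto.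
Qed.

Lemma zero_graph d p q : ~ h (zero A H d) p q.
Proof. unfold zero. rewrite Hr. unfold pf_restr, pdom. intros [Hd Hn]. apply Hn; eauto. Qed.

Lemma le_iff x y : le A H x y <-> (forall p q, h x p q -> h y p q).
Proof.
  unfold le. split.
  - intros E p q Hx. rewrite <- E in Hx. apply lhd_graph in Hx. tauto.
  - intros Sub. apply Hinj. apply graph_eq. intros p q. rewrite lhd_graph. split.
    + intros [Hy [q' Hx]]. assert (q = q') by (apply (Hfun y p); auto). subst; auto.
    + intros Hx. split; auto. exists q; auto.
Qed.

Lemma empty_zero d : (forall p q, ~ h d p q) -> d = zero A H d.
Proof.
  intro E. apply Hinj, graph_eq. intros p q. split; intro K.
  - exfalso; eapply E; eauto.
  - exfalso; eapply zero_graph; eauto.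
Qed.
End Pf.

Theorem lemma5p7 (sig : signature) (H : sig ORestr) (A : sigma_algebra sig) :
  representable A ->
  atoms_separating A H ->
  forall (S : A -> Prop) (j : A) (a : A),
    is_lub A H S j ->
    is_lub A H (fun t => exists s, S s /\ t = lhd A H a s) (lhd A H a j).
Proof.
  intros [X [h [Hinj [Hfun Hpres]]]] Hsep S j a [Hub Hleast].
  assert (Hr : forall a b, h (restr A H a b) = pf_restr (h a) (h b))
    by (intros; exact (Hpres ORestr H a0 b)).
  pose proof (lhd_graph sig H A X h Hr) as LG.
  pose proof (le_iff sig H A X h Hinj Hfun Hr) as LE.
  split.
  - intros t [s [Hs ->]]. apply LE. intros p q K. apply LG in K. apply LG.
    destruct K as [K1 K2]. split; auto. exact (proj1 (LE _ _) (Hub s Hs) p q K1).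
  - intros u Hu. apply NNPP; intro Hn.
    destruct (Hsep _ _ Hn) as [c [[Hcz Hat] [Hc1 Hc2]]].
    apply Hc2. apply LE. intros p q Hcpq.
    assert (Hcj : forall p q, h c p q -> h j p q /\ pdom (h a) p).
    { intros p' q' K. apply LG. exact (proj1 (LE _ _) Hc1 p' q' K). }
    assert (Ex : exists s, S s /\ lhd A H c s <> zero A H (lhd A H c s)).
    { apply NNPP; intro Nex.
      assert (Emp : forall s, S s -> forall p q, h s p q -> ~ pdom (h c) p).
      { intros s Hs p' q' K Hd. apply Nex. exists s. split; auto. intro Z.
        apply (zero_graph sig H A X h Hr (lhd A H c s) p' q'). rewrite <- Z.
        apply LG. auto. }
      assert (Hjr : le A H j (restr A H c j)).
      { apply Hleast. intros s Hs. apply LE. intros p' q' K. rewrite Hr.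
        split. exact (proj1 (LE _ _) (Hub s Hs) p' q' K). eapply Emp; eauto. }
      pose proof (proj1 (LE _ _) Hjr p q (proj1 (Hcj p q Hcpq))) as K.
      rewrite Hr in K. destruct K as [_ K]. apply K. exists q; auto. }
    destruct Ex as [s [Hs Hnz]].
    assert (Hle : le A H (lhd A H c s) c).
    { apply LE. intros p' q' K. apply LG in K. destruct K as [Ks [q'' Kc]].
      assert (q' = q'').
      { apply (Hfun j p'). exact (proj1 (LE _ _) (Hub s Hs) p' q' Ks).
        exact (proj1 (Hcj _ _ Kc)). }
      subst; auto. }
    destruct (Hat _ Hle) as [Z | Eq]; [contradiction|].
    assert (K : h (lhd A H c s) p q) by (rewrite Eq; auto).
    apply LG in K. destruct K as [Ks _].
    apply (proj1 (LE _ _) (Hu (lhd A H a s) (ex_intro _ s (conj Hs eq_refl)))).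
    apply LG. split; auto. exact (proj2 (Hcj p q Hcpq)).
Qed.
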